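(* Let $\beta\subset\mathcal B$ be such that the $\beta$-state $\Sigma_\beta$ is not contradictory. If $\Sigma_\beta$ is trivial (i.e. it has no vertices, no edges and no links), then $\Sigma_\beta$ is solvable and $C_\beta^M$ is a point.
   Context: Let $Q$ be a quiver with finite $Q_0,Q_1$, $M$ a finite-dimensional complex representation with ordered basis $\mathcal B=\bigcup_p\mathcal B_p$ (bases $\mathcal B_p$ of $M_p$, total order on $\mathcal B$); $M_v(i)=\sum_j\mu_{v,i,j}j$; coefficient quiver $\Gamma$ with vertices $\mathcal B$, arrows $(v,i,j)$ with $\mu_{v,i,j}\ne0$, natural map $F:\Gamma\to Q$. Identify $M$ with $\mathbb C^d$ via $\mathcal B$; for $|\beta|=e$, $\Delta_\beta$ is the Plücker coordinate, $\beta\le\beta'$ iff the $l$-th smallest element of $\beta$ is $\le$ that of $\beta'$ for all $l$, $C_\beta(d)=\{V:\Delta_\beta(V)\ne0,\Delta_{\beta'}(V)=0\ \forall\beta'>\beta\}$, and $C_\beta^M$ is the variety of subrepresentations $N$ of $M$ with $\bigoplus_pN_p\in C_\beta(d)$. Schubert system: $E(v,t,s)=\sum_{(v,s',t')\in\Gamma_1}\mu_{v,s',t'}w_{t,t'}w_{s',s}-\sum_{(v,s',t)\in\Gamma_1}\mu_{v,s',t}w_{s',s}$ for $v:p\to q$, $s\in F^{-1}(p)$, $t\in F^{-1}(q)$; $\mathrm{Rel}^2=\{(i,j):F(i)=F(j),i\le j\}$; $\mathrm{Rel}^3$ = such $(v,t,s)$ with some $(v,s',t')\in\Gamma_1$,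 $s\ge s'$, $t\le t'$; $E(v,t,s)$ is a polynomial in $w_{i,j}$, $(i,j)\in\mathrm{Rel}^2$ (others set to $0$). $\Sigma$: graph on $\mathrm{Rel}^2\sqcup\mathrm{Rel}^3$, edge $\{(i,j),(v,t,s)\}$ iff $w_{i,j}$ occurs in $E(v,t,s)$, links $\lambda=((v,t,s),S)$ whenever $\prod_Sw_{i,j}$ occurs with nonzero coefficient $\mu_\lambda$. A partial evaluation is a partial $\mathrm{ev}:\mathrm{Rel}^2\dashrightarrow\mathbb C$ such that for each triple and neighbour $(k,l)$: if all other neighbours are in the domain then so is $(k,l)$ and $\sum_\lambda\mu_\lambda\prod_S\mathrm{ev}=0$. $f_\beta(i,j)=1$ if $i=j\in\beta$, $0$ if $i\in\beta,i\ne j$, $0$ if $j\notin\beta$, undefined otherwise. $\Sigma_\beta$ is contradictory if no partial evaluation extends $f_\beta$; else $\mathrm{ev}_\beta$ is the unique minimal one. For $\lambda=((v,t,s),S)$, $\mu_{\beta,\lambda}=\sum\mu_{\lambda'}\prod_{S'\cap\mathrm{dom}\,\mathrm{ev}_\beta}\mathrm{ev}_\beta$ over links $\lambda'=((v,t,s),S')$ of $\Sigma$ with $S'\setminus\mathrm{dom}\,\mathrm{ev}_\beta=S$; $\Sigma_\beta$ has links the $\lambda$ with $\mu_{\beta,\lambda}\ne0$, vertices the pairs outside $\mathrm{dom}\,\mathrm{ev}_\beta$ and the triples that are tips of its links, edges the edges $\{\tau,\pi\}$ of $\Sigma$ with $\pi\in S$ for a link $(\tau,S)$ of $\Sigma_\beta$.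 A solution of such a system is an orientation of its edges such that (S1) each triple has exactly one outgoing edge $\{\tau,\pi\}$, and it is simply linked ($(\tau,\{\pi\})$ is a link and the edge is a leg of no other link); (S2) each pair has at most one incoming edge; (S3) no oriented cycles. Solvable = has a solution. *)

(* Defs.v *)
From mathcomp Require Import all_boot all_algebra.
From mathcomp Require Import complex.
From mathcomp Require Import Rstruct.
From Stdlib Require Import Relations.

Set Implicit Arguments.
Unset Strict Implicit.
Unset Printing Implicit Defensive.

Import GRing.Theory.
Local Open Scope ring_scope.

Definition C : closedFieldType := (Rdefinitions.R)[i].

Section SchubertSystems.

Variables (Q0 Q1 : finType) (src tgt : Q1 -> Q0).
(* The ordered basis B of M is identified with 'I_d, with its natural order;
   F : B -> Q0 sends a basis vector of M_p to p. *)
Variable d : nat.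
Variable F : 'I_d -> Q0.
(* mu v i j = mu_{v,i,j}, i.e. M_v(i) = sum_j mu_{v,i,j} j. *)
Variable mu : Q1 -> 'I_d -> 'I_d -> C.

Definition is_coef_data : Prop :=
  forall v i j, mu v i j != 0 -> F i = src v /\ F j = tgt v.

(* M_p as a subspace of C^d (row space of the coordinate projection). *)
Definition Mspace (p : Q0) : 'M[C]_d :=
  \matrix_(i, j) ((i == j) && (F i == p))%:R.

(* The linear map M_v, acting on row vectors: e_i *m Mmap v = sum_j mu_{v,i,j} e_j. *)
Definition Mmap (v : Q1) : 'M[C]_d := \matrix_(i, j) mu v i j.

Definition is_subrep (N : Q0 -> 'M[C]_d) : Prop :=
  (forall p, (N p <= Mspace p)%MS) /\
  (forall v, (N (src v) *m Mmap v <= N (tgt v))%MS).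

Definition rk (b : {set 'I_d}) (k : 'I_d) : nat := #|[set l in b | (l < k)%N]|.

(* Plücker coordinate Delta_b of the row space of A : 'M_(r, d) (r = #|b|):
   the r x r minor on the columns in b, in increasing order. *)
Definition plucker (r : nat) (A : 'M[C]_(r, d)) (b : {set 'I_d}) : C :=
  \det (\matrix_(i < r, j < r) \sum_(k in b | rk b k == j) A i k).

(* b <= b' : the l-th smallest element of b is <= the l-th smallest of b'. *)
Definition bruhat_le (b b' : {set 'I_d}) : Prop :=
  #|b| = #|b'| /\
  forall k k', k \in b -> k' \in b' -> rk b k = rk b' k' -> (k <= k')%N.

Definition in_schubert_cell (beta : {set 'I_d}) (V : 'M[C]_d) : Prop :=
  \rank V = #|beta| /\
  plucker (row_base V) beta != 0 /\
  (forall beta', bruhat_le beta beta' -> beta' != beta ->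
     plucker (row_base V) beta' = 0).

Definition in_CbetaM (beta : {set 'I_d}) (N : Q0 -> 'M[C]_d) : Prop :=
  is_subrep N /\ in_schubert_cell beta (\sum_p N p)%MS.

(* C_beta^M is a point: it has exactly one element (subrepresentations being
   equal when all their subspaces N_p are equal). *)
Definition CbetaM_is_point (beta : {set 'I_d}) : Prop :=
  exists N0, in_CbetaM beta N0 /\
    forall N, in_CbetaM beta N -> forall p, (N p == N0 p)%MS.

Definition pair := ('I_d * 'I_d)%type.
Definition triple := (Q1 * 'I_d * 'I_d)%type.

Definition gamma_arrow (v : Q1) (i j : 'I_d) : bool := mu v i j != 0.

Definition rel2 (x : pair) : bool := (F x.1 == F x.2) && (x.1 <= x.2)%N.

Definition rel3 (tau : triple) : Prop :=
  let: (v, t, s) := tau in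
  F s = src v /\ F t = tgt v /\
  exists s' t', gamma_arrow v s' t' /\ (s' <= s)%N /\ (t <= t')%N.

(* Monomials in the variables w_{i,j}: exponent vectors. *)
Definition mono := {ffun pair -> nat}.
Definition mono1 (x : pair) : mono := [ffun y => (y == x) : nat].
Definition mono2 (x y : pair) : mono := [ffun z => ((z == x) : nat) + (z == y)].

(* E(v,t,s) written as a formal list of terms (coefficient, monomial),
   where variables w_{i,j} with (i,j) not in Rel^2 are set to 0. *)
Definition Eterms (tau : triple) : seq (C * mono) :=
  let: (v, t, s) := tau in
  [seq (mu v x.1 x.2, mono2 (t, x.2) (x.1, s)) |
     x <- enum [pred x : 'I_d * 'I_d |
                 [&& gamma_arrow v x.1 x.2, rel2 (t, x.2) & rel2 (x.1, s)]]]
  ++ [seq (- mu v s' t, mono1 (s', s)) |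
        s' <- enum [pred s' : 'I_d | gamma_arrow v s' t && rel2 (s', s)]].

Definition coefE (tau : triple) (m : mono) : C :=
  \sum_(x <- Eterms tau | x.2 == m) x.1.

Definition monosE (tau : triple) : seq mono :=
  [seq m <- undup [seq x.2 | x <- Eterms tau] | coefE tau m != 0].

(* links lambda = (tau, m) of Sigma, with legs the variables occurring in m,
   and coefficient mu_lambda = coefE tau m. *)
Definition link (tau : triple) (m : mono) : Prop :=
  rel3 tau /\ coefE tau m != 0.

Definition edge (tau : triple) (pi : pair) : Prop :=
  rel2 pi /\ exists m, link tau m /\ (0 < m pi)%N.

Definition peval := pair -> option C.

Definition in_dom (ev : peval) (x : pair) : bool := ev x != None.

Definition val_mono (ev : peval) (m : mono) : C :=
  \prod_(x : pair) (odflt 0 (ev x)) ^+ m x.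

Definition evalE (ev : peval) (tau : triple) : C :=
  \sum_(m <- monosE tau) coefE tau m * val_mono ev m.

Definition is_partial_eval (ev : peval) : Prop :=
  (forall x, in_dom ev x -> rel2 x) /\
  forall tau pi, rel3 tau -> edge tau pi ->
    (forall pi', edge tau pi' -> pi' <> pi -> in_dom ev pi') ->
    in_dom ev pi /\ evalE ev tau = 0.

Definition pe_extends (ev ev' : peval) : Prop :=
  forall x, in_dom ev x -> ev' x = ev x.

Definition f_beta (beta : {set 'I_d}) (x : pair) : option C :=
  if x.1 \in beta then (if x.1 == x.2 then Some 1 else Some 0)
  else if x.2 \notin beta then Some 0 else None.

Definition extends_f_beta (beta : {set 'I_d}) (ev : peval) : Prop :=
  forall x, rel2 x -> f_beta beta x != None -> ev x = f_beta beta x.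

Definition contradictory (beta : {set 'I_d}) : Prop :=
  ~ exists ev, is_partial_eval ev /\ extends_f_beta beta ev.

(* ev is ev_beta: the unique minimal (= least, w.r.t. extension) partial
   evaluation extending f_beta. *)
Definition is_ev_beta (beta : {set 'I_d}) (ev : peval) : Prop :=
  is_partial_eval ev /\ extends_f_beta beta ev /\
  forall ev', is_partial_eval ev' -> extends_f_beta beta ev' -> pe_extends ev ev'.

Definition restr_out (ev : peval) (m : mono) : mono :=
  [ffun x => if in_dom ev x then 0%N else m x].

Definition mu_beta (ev : peval) (tau : triple) (m : mono) : C :=
  \sum_(m' <- monosE tau | restr_out ev m' == m)
     coefE tau m' * \prod_(x : pair | in_dom ev x) (odflt 0 (ev x)) ^+ m' x.

Definition link_beta (ev : peval) (tau : triple) (m : mono) : Prop :=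
  rel3 tau /\ mu_beta ev tau m != 0.

Definition pair_vertex_beta (ev : peval) (pi : pair) : Prop :=
  rel2 pi /\ ~~ in_dom ev pi.

Definition triple_vertex_beta (ev : peval) (tau : triple) : Prop :=
  exists m, link_beta ev tau m.

Definition edge_beta (ev : peval) (tau : triple) (pi : pair) : Prop :=
  edge tau pi /\ exists m, link_beta ev tau m /\ (0 < m pi)%N.

Definition trivial_state (ev : peval) : Prop :=
  (forall pi, ~ pair_vertex_beta ev pi) /\
  (forall tau, ~ triple_vertex_beta ev tau) /\
  (forall tau pi, ~ edge_beta ev tau pi) /\
  (forall tau m, ~ link_beta ev tau m).

Record system := System {
  sys_pair : pair -> Prop;
  sys_triple : triple -> Prop;
  sys_edge : triple -> pair -> Prop;
  sys_link : triple -> mono -> Prop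
}.

Definition Sigma_beta (ev : peval) : system :=
  System (pair_vertex_beta ev) (triple_vertex_beta ev) (edge_beta ev) (link_beta ev).

(* An orientation: o tau pi = true means the edge {tau, pi} is oriented
   tau -> pi, false means pi -> tau. *)
Definition arc (S : system) (o : triple -> pair -> bool)
    (a b : pair + triple) : Prop :=
  match a, b with
  | inr tau, inl pi => sys_edge S tau pi /\ o tau pi
  | inl pi, inr tau => sys_edge S tau pi /\ ~~ o tau pi
  | _, _ => False
  end.

Definition is_solution (S : system) (o : triple -> pair -> bool) : Prop :=
  (forall tau, sys_triple S tau ->
     exists pi, (sys_edge S tau pi /\ o tau pi) /\
       (forall pi', sys_edge S tau pi' -> o tau pi' -> pi' = pi) /\
       sys_link S tau (mono1 pi) /\
       (forall m, sys_link S tau m -> (0 < m pi)%N -> m = mono1 pi)) /\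
  (forall pi, sys_pair S pi -> forall tau1 tau2,
     sys_edge S tau1 pi -> o tau1 pi -> sys_edge S tau2 pi -> o tau2 pi ->
     tau1 = tau2) /\
  ~ (exists x, clos_trans _ (arc S o) x x).

Definition solvable (S : system) : Prop := exists o, is_solution S o.

End SchubertSystems.

(* Main.v *)
Require Import Defs.
From mathcomp Require Import all_boot all_algebra.
From mathcomp Require Import perm ring.
From Stdlib Require Import Relations Classical FunctionalExtensionality.
Set Implicit Arguments. Unset Strict Implicit. Unset Printing Implicit Defensive.
Import GRing.Theory.
Local Open Scope ring_scope.

Section Rk.
Variable d : nat.
Implicit Types (b : {set 'I_d}) (x y : 'I_d).

Lemma rk_lt b x y : x \in b -> (x < y)%N -> (rk b x < rk b y)%N.
Proof.
move=> xb xy; apply: proper_card; apply/properP; split.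
  by apply/subsetP=> l; rewrite !inE => /andP[-> /ltn_trans]; apply.
by exists x; rewrite !inE ?ltnn ?andbF // xb.
Qed.

Lemma rk_le b x y : (x <= y)%N -> (rk b x <= rk b y)%N.
Proof.
move=> xy; apply: subset_leq_card; apply/subsetP=> l; rewrite !inE.
by case/andP=> -> lx; exact: leq_trans lx xy.
Qed.

Lemma rk_inj b x y : x \in b -> y \in b -> rk b x = rk b y -> x = y.
Proof.
move=> xb yb e; case: (ltngtP x y) => h.
- by move: (rk_lt xb h); rewrite e ltnn.
- by move: (rk_lt yb h); rewrite e ltnn.
- exact: val_inj.
Qed.

Lemma rk_bound b x : x \in b -> (rk b x < #|b|)%N.
Proof.
move=> xb; apply: proper_card; apply/properP; split.
  by apply/subsetP=> l; rewrite !inE => /andP[].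
by exists x; rewrite // !inE ltnn andbF.
Qed.

Lemma rk_surj b m : (m < #|b|)%N -> exists2 x, x \in b & rk b x = m.
Proof.
move=> hm; suff /exists_inP[x xb /eqP e] : [exists x in b, rk b x == m] by exists x.
apply: contraT; rewrite negb_exists => /forallP hn'.
have hn : forall x, x \in b -> rk b x != m by move=> x xb; move: (hn' x); rewrite xb.
have U : uniq (m :: map (rk b) (enum b)).
  rewrite /= map_inj_in_uniq ?enum_uniq ?andbT.
    apply/mapP=> [[x]]; rewrite mem_enum => xb e.
    by move: (hn x xb); rewrite e eqxx.
  by move=> x y; rewrite !mem_enum; apply: rk_inj.
have := uniq_leq_size U (s2 := iota 0 #|b| ) _.
rewrite size_iota /= size_map -cardE ltnn; apply.
move=> z; rewrite inE mem_iota /= add0n => /orP[/eqP->//|/mapP[x]].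
by rewrite mem_enum => xb ->; apply: rk_bound.
Qed.
End Rk.

Section Sel.
Variable d : nat.
Implicit Types (b : {set 'I_d}) (x y : 'I_d).

Definition Sel n b : 'M[C]_(d, n) := \matrix_(x, m) ((x \in b) && (rk b x == m))%:R.

Lemma pluckerE n (A : 'M_(n,d)) b : plucker A b = \det (A *m Sel n b).
Proof.
congr (\det _); apply/matrixP=> i j; rewrite !mxE big_mkcond /=.
apply: eq_bigr=> k _; rewrite !mxE.
by case: (k \in b); case: (rk b k == j); rewrite /= ?mulr1 ?mulr0.
Qed.

Lemma colSel n b k (Z : 'M_(k,d)) i y (c : 'I_n) :
  y \in b -> rk b y = c -> (Z *m Sel n b) i c = Z i y.
Proof.
move=> yb ry; rewrite mxE (bigD1 y) // mxE yb ry eqxx mulr1 big1 ?Monoid.mulm1 //.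
move=> x xy; rewrite mxE; case xb: (x \in b); rewrite ?mulr0 //=.
case: eqP; rewrite ?mulr0 // -ry => /(rk_inj xb yb) e.
by rewrite e eqxx in xy.
Qed.

Lemma SelT n b k (Z : 'M_(d,k)) i y (c : 'I_n) :
  y \in b -> rk b y = c -> ((Sel n b)^T *m Z) c i = Z y i.
Proof.
move=> yb ry; rewrite -[(Sel n b)^T *m Z]trmxK trmx_mul trmxK mxE.
by rewrite (colSel _ _ yb ry) mxE.
Qed.

Lemma SelL n b k (B : 'M_(n,k)) i y (c : 'I_n) :
  y \in b -> rk b y = c -> (Sel n b *m B) y i = B c i.
Proof.
move=> yb ry; rewrite mxE (bigD1 c) // mxE yb ry eqxx mul1r big1 ?Monoid.mulm1 //.
by move=> m mc; rewrite mxE yb ry; case: eqP => [e|_]; rewrite ?mul0r //; case/eqP: mc; by apply: val_inj; rewrite /= e.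
Qed.

Lemma SelL0 n b k (B : 'M_(n,k)) i y : y \notin b -> (Sel n b *m B) y i = 0.
Proof. by move=> yb; rewrite mxE big1 // => m _; rewrite mxE (negbTE yb) mul0r. Qed.

Lemma SelTSel n b : #|b| = n -> (Sel n b)^T *m Sel n b = 1%:M.
Proof.
move=> hb; apply/matrixP=> m c.
have [y yb ry] : exists2 y, y \in b & rk b y = c by apply: rk_surj; rewrite hb.
rewrite (colSel _ _ yb ry) !mxE yb ry eq_sym.
by [].
Qed.
End Sel.

Section W.
Variables (Q0 Q1 : finType) (src tgt : Q1 -> Q0) (d : nat) (F : 'I_d -> Q0).
Variable mu : Q1 -> 'I_d -> 'I_d -> C.

Lemma rel2E (i j : 'I_d) : rel2 F (i, j) = (F i == F j) && (i <= j)%N.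
Proof. by []. Qed.

Definition Wm (w : pair d -> C) : 'M[C]_d := \matrix_(j, i) w (i, j).
Definition Wp (w : pair d -> C) p : 'M[C]_d :=
  \matrix_(j, i) if F j == p then w (i, j) else 0.
Definition W1 (w : pair d -> C) := forall x, ~~ rel2 F x -> w x = 0.

Lemma mulMspace k (X : 'M[C]_(k,d)) p a i :
  (X *m Mspace F p) a i = if F i == p then X a i else 0.
Proof.
rewrite mxE (bigD1 i) // mxE eqxx big1 ?Monoid.mulm1.
  by case: (F i == p); rewrite ?mulr1 ?mulr0.
by move=> j ji; rewrite mxE (negbTE ji) mulr0.
Qed.

Lemma Mspace_idem p : Mspace F p *m Mspace F p = Mspace F p.
Proof.
apply/matrixP=> a i; rewrite mulMspace; case: eqP=> // h.
rewrite mxE; case: eqP=> [e|]; rewrite ?andFb //.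
by rewrite e; case: eqP.
Qed.

Lemma subM k (N : 'M[C]_(k,d)) p : (N <= Mspace F p)%MS -> N *m Mspace F p = N.
Proof. by case/submxP=> X ->; rewrite -mulmxA Mspace_idem. Qed.

Lemma subMo k (N : 'M[C]_(k,d)) p q :
  (N <= Mspace F q)%MS -> p != q -> N *m Mspace F p = 0.
Proof.
case/submxP=> X -> pq; rewrite -mulmxA.
suff -> : Mspace F q *m Mspace F p = 0 by rewrite mulmx0.
apply/matrixP=> a i; rewrite mulMspace !mxE; case: eqP=> // h.
case: eqP=> [e|]; rewrite ?andFb //.
by rewrite e h andTb (negbTE pq).
Qed.

Lemma WpE w : W1 w -> forall p, Wp w p = Wm w *m Mspace F p.
Proof.
move=> h1 p; apply/matrixP=> j i; rewrite mulMspace !mxE.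
have [e|ne] := eqVneq (F i) (F j); first by rewrite e.
rewrite h1; first by case: ifP; case: ifP.
by rewrite rel2E (negbTE ne).
Qed.

Lemma Wp_sub w p : (Wp w p <= Wm w)%MS.
Proof.
apply/submxP; exists (\matrix_(j, k) ((j == k) && (F j == p))%:R).
apply/matrixP=> j i; rewrite !mxE (bigD1 j) // !mxE eqxx big1 ?Monoid.mulm1.
  by case: (F j == p); rewrite ?mul1r ?mul0r.
by move=> k kj; rewrite mxE eq_sym (negbTE kj) mul0r.
Qed.

Lemma Wm_sum w : Wm w = \sum_p Wp w p.
Proof.
apply/matrixP=> j i; rewrite summxE (bigD1 (F j)) // !mxE eqxx big1 ?Monoid.mulm1 //.
by move=> q; rewrite mxE eq_sym => /negbTE ->.
Qed.

Lemma Wm_eq_sum w : ((\sum_p Wp w p)%MS == Wm w)%MS.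
Proof.
apply/andP; split; first by apply/sumsmx_subP=> p _; apply: Wp_sub.
rewrite Wm_sum; apply: summx_sub=> p _; exact: (sumsmx_sup p).
Qed.

Lemma subrep_eq (N : Q0 -> 'M[C]_d) w : W1 w ->
  (forall p, N p <= Mspace F p)%MS -> ((\sum_p N p)%MS == Wm w)%MS ->
  forall p, (N p == Wp w p)%MS.
Proof.
move=> h1 hN /andP[hS1 hS2] p; apply/andP; split.
  have : (N p <= Wm w)%MS.
    by apply: submx_trans hS1; apply: (sumsmx_sup p).
  case/submxP=> X eX.
  by rewrite -(subM (hN p)) eX -mulmxA -WpE //; apply: submxMl.
case/sub_sumsmxP: hS2 => u eu.
rewrite WpE // eu mulmx_suml (bigD1 p) // big1 ?Monoid.mulm1.
  by rewrite -mulmxA subM //; apply: submxMl.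
move=> q qp; rewrite -mulmxA (subMo (hN q)) ?mulmx0 //.
by rewrite eq_sym.
Qed.
End W.

Section E.
Variables (Q0 Q1 : finType) (src tgt : Q1 -> Q0) (d : nat) (F : 'I_d -> Q0).
Variable mu : Q1 -> 'I_d -> 'I_d -> C.
Hypothesis Hmu : is_coef_data src tgt F mu.

Definition Eq (w : pair d -> C) v t s : Prop :=
  \sum_s' \sum_t' mu v s' t' * w (t, t') * w (s', s) = \sum_s' mu v s' t * w (s', s).

Lemma mu0t v i j : F j != tgt v -> mu v i j = 0.
Proof.
move=> h; have [//|nz] := eqVneq (mu v i j) 0.
by case: (Hmu nz) => _ e; rewrite e eqxx in h.
Qed.

Lemma mu0s v i j : F i != src v -> mu v i j = 0.
Proof.
move=> h; have [//|nz] := eqVneq (mu v i j) 0.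
by case: (Hmu nz) => e _; rewrite e eqxx in h.
Qed.

Lemma rhs_form (w : pair d -> C) v s t0 :
  \sum_t' (\sum_k w (k, s) * mu v k t') * (if F t' == tgt v then w (t0, t') else 0)
  = \sum_s' \sum_t' mu v s' t' * w (t0, t') * w (s', s).
Proof.
rewrite (eq_bigr (fun t' => \sum_k w (k, s) * mu v k t' *
     (if F t' == tgt v then w (t0, t') else 0))); last by move=> t' _; rewrite mulr_suml; reflexivity.
rewrite exchange_big; apply: eq_bigr=> k _; apply: eq_bigr=> t' _.
case: eqP=> ht; first by ring.
by rewrite mu0t ?mulr0 ?mul0r //; apply/eqP.
Qed.

Lemma Wp_subrep (w : pair d -> C) : W1 F w ->
  (forall v t s, F s = src v -> Eq w v t s) -> is_subrep src tgt F mu (Wp F w).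
Proof.
move=> h1 hE; split=> [p|v]; first by rewrite WpE //; apply: submxMl.
apply/submxP.
exists (\matrix_(s, t) (if F s == src v then \sum_k w (k, s) * mu v k t else 0)).
apply/matrixP=> s t0; rewrite !mxE.
case hs: (F s == src v).
  under eq_bigr => j _ do rewrite !mxE hs.
  under [RHS]eq_bigr => j _ do rewrite !mxE hs.
  rewrite rhs_form hE; last exact/eqP.
  by apply: eq_bigr=> k _; rewrite mulrC.
rewrite big1; last by move=> k _; rewrite !mxE hs mul0r.
by rewrite big1 // => t _; rewrite !mxE hs mul0r.
Qed.
Lemma subrep_Eq (beta : {set 'I_d}) (N : Q0 -> 'M[C]_d) (w : pair d -> C) :
  W1 F w -> (forall x, x.2 \notin beta -> w x = 0) ->
  (forall x, x.1 \in beta -> x.2 \in beta -> w x = (x.1 == x.2)%:R) ->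
  is_subrep src tgt F mu N -> ((\sum_p N p)%MS == Wm w)%MS ->
  forall v t s, F s = src v -> Eq w v t s.
Proof.
move=> h1 h2 h3 [hM hV] hS v t0 s hs.
have hE := subrep_eq h1 hM hS.
have hsub : (Wp F w (src v) *m Mmap mu v <= Wp F w (tgt v))%MS.
  have /andP[_ a] := hE (src v); have /andP[b _] := hE (tgt v).
  apply: submx_trans b; apply: submx_trans (hV v); exact: submxMr.
case/submxP: hsub => X eX.
have wb : forall t t', t \in beta -> w (t, t') = (t == t')%:R.
  move=> t t' tb; case t'b: (t' \in beta); first by apply: h3.
  rewrite h2; last by rewrite /= t'b.
  by case: eqP => // e; rewrite -e tb in t'b.
have e1 : forall t, (Wp F w (src v) *m Mmap mu v) s t = \sum_k w (k, s) * mu v k t.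
  by move=> t; rewrite mxE; apply: eq_bigr => k _; rewrite !mxE hs eqxx.
have hX : forall t, t \in beta -> F t = tgt v -> X s t = \sum_k w (k, s) * mu v k t.
  move=> t tb ht.
  have e2 : (X *m Wp F w (tgt v)) s t = X s t.
    rewrite mxE (bigD1 t) // !mxE ht eqxx wb // eqxx mulr1 big1 ?Monoid.mulm1 //.
    move=> t' t't; rewrite !mxE; case: ifP => _; last by rewrite mulr0.
    by rewrite wb // (eq_sym t t') (negbTE t't) mulr0.
  by rewrite -e2 -eX e1.
rewrite /Eq -rhs_form.
transitivity (\sum_t' X s t' * (if F t' == tgt v then w (t0, t') else 0)).
  apply: eq_bigr => t' _; case: (F t' =P tgt v) => ht; last by rewrite !mulr0.
  case t'b: (t' \in beta); first by rewrite hX.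
  by rewrite h2 ?mulr0 //= t'b.
transitivity ((X *m Wp F w (tgt v)) s t0).
  by rewrite mxE; apply: eq_bigr => t' _; rewrite !mxE.
by rewrite -eX e1; apply: eq_bigr => k _; rewrite mulrC.
Qed.
End E.

Local Notation coefE := Defs.coefE.
Lemma fst_pair (A B : Type) (a : A) (b : B) : (a, b).1 = a. Proof. by []. Qed.
Lemma snd_pair (A B : Type) (a : A) (b : B) : (a, b).2 = b. Proof. by []. Qed.
Section Ev.
Variables (Q0 Q1 : finType) (src tgt : Q1 -> Q0) (d : nat) (F : 'I_d -> Q0).
Variable mu : Q1 -> 'I_d -> 'I_d -> C.

Definition wof (ev : peval d) (x : pair d) : C := odflt 0 (ev x).

Lemma prod1 ev x : \prod_z (odflt 0 (ev z)) ^+ ((z == x) : nat) = wof ev x.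
Proof.
rewrite (bigD1 x) // eqxx expr1 big1 ?Monoid.mulm1 //.
by move=> y yx; rewrite (negbTE yx) expr0.
Qed.

Lemma val_mono1 ev x : val_mono ev (mono1 x) = wof ev x.
Proof. by rewrite /val_mono; under eq_bigr => z _ do rewrite ffunE; apply: prod1. Qed.

Lemma val_mono2 ev x y : val_mono ev (mono2 x y) = wof ev x * wof ev y.
Proof.
rewrite /val_mono.
under eq_bigr => z _ do rewrite ffunE exprD.
by rewrite big_split !prod1.
Qed.

Lemma evalE_sum ev tau :
  evalE F mu ev tau = \sum_(x <- Eterms F mu tau) x.1 * val_mono ev x.2.
Proof.
rewrite /evalE /monosE big_filter big_mkcond.
transitivity (\sum_(m <- undup [seq x.2 | x <- Eterms F mu tau])
               \sum_(x <- Eterms F mu tau) (if x.2 == m then x.1 * val_mono ev x.2 else 0)).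
  apply: eq_bigr => m _.
  have -> : (if coefE F mu tau m != 0 then coefE F mu tau m * val_mono ev m else 0)
     = coefE F mu tau m * val_mono ev m by case: eqP => [->|]; rewrite ?mul0r.
  rewrite /coefE.
  rewrite mulr_suml big_mkcond; apply: eq_bigr => x _.
  by case: eqP => [->|_]; rewrite ?mul0r; reflexivity.
rewrite exchange_big; apply: eq_big_seq => x xin.
rewrite -big_mkcond (big_rem x.2) ?mem_undup; last by apply/mapP; exists x.
rewrite eqxx big1_seq ?Monoid.mulm1 // => m /andP[/eqP e].
by rewrite mem_rem_uniq ?undup_uniq // inE e eqxx.
Qed.

Lemma wof0 ev x : (forall x, in_dom ev x -> rel2 F x) -> ~~ rel2 F x -> wof ev x = 0.
Proof.
move=> hd nx; rewrite /wof; case e: (ev x) => [c|] //.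
have : in_dom ev x by rewrite /in_dom e.
by move/hd; rewrite (negbTE nx).
Qed.

Lemma Eterms_val ev v t s : (forall x, in_dom ev x -> rel2 F x) ->
  \sum_(x <- Eterms F mu (v, t, s)) x.1 * val_mono ev x.2 =
  \sum_s' \sum_t' mu v s' t' * wof ev (t, t') * wof ev (s', s)
  - \sum_s' mu v s' t * wof ev (s', s).
Proof.
move=> hd; rewrite /Eterms big_cat !big_map !big_enum.
congr (_ + _).
  rewrite pair_bigA big_mkcond; apply: eq_bigr => p _; rewrite val_mono2 inE.
  case: ifP => h; first by rewrite fst_pair mulrA.
  case: (mu v p.1 p.2 =P 0) => [->|/eqP nz]; first by rewrite !mul0r.
  rewrite /gamma_arrow nz andTb in h.
  case: (boolP (rel2 F (t, p.2))) => r1; last by rewrite (wof0 hd r1) mulr0 mul0r.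
  rewrite r1 andTb in h.
  by rewrite (wof0 hd (negbT h)) mulr0.
rewrite -sumrN big_mkcond; apply: eq_bigr => i _.
rewrite inE fst_pair snd_pair val_mono1.
case: ifP => h; first by rewrite mulNr.
case: (mu v i t =P 0) => [->|/eqP nz]; first by rewrite mul0r oppr0.
rewrite /gamma_arrow nz andTb in h.
by rewrite (wof0 hd (negbT h)) mulr0 oppr0.
Qed.

Lemma evalE_Eq ev v t s : (forall x, in_dom ev x -> rel2 F x) ->
  (evalE F mu ev (v, t, s) = 0) <-> Eq mu (wof ev) v t s.
Proof.
move=> hd; rewrite evalE_sum Eterms_val // /Eq.
by split=> [/eqP|->]; [rewrite subr_eq0 => /eqP|rewrite subrr].
Qed.

Lemma monosE_supp tau m x :
  m \in monosE F mu tau -> (0 < m x)%N -> rel2 F x.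
Proof.
rewrite /monosE mem_filter => /andP[_]; rewrite mem_undup => /mapP[y yin ->].
case: tau yin => [[v t] s]; rewrite /Eterms mem_cat => /orP[] /mapP[z];
  rewrite mem_enum inE => hz ->; rewrite snd_pair ffunE.
  case/and3P: hz => _ r1 r2.
  case: eqP => [->|_]; first by [].
  by case: eqP => [->|_].
by case/andP: hz => _ r; case: eqP => [->|_].
Qed.

Lemma mu_beta_triv ev tau : (forall x, rel2 F x -> in_dom ev x) ->
  (forall x, in_dom ev x -> rel2 F x) ->
  mu_beta F mu ev tau [ffun => 0%N] = evalE F mu ev tau.
Proof.
move=> hall hd; rewrite /mu_beta /evalE big_seq_cond [RHS]big_seq_cond.
apply: eq_big => [m|m /andP[min _]].
  case min: (m \in monosE F mu tau); rewrite ?andFb ?andTb //.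
  apply/eqP/ffunP => x; rewrite !ffunE; case: ifP => // nd.
  case: (posnP (m x)) => // /(monosE_supp min) /hall.
  by rewrite nd.
congr (_ * _); rewrite /val_mono big_mkcond; apply: eq_bigr => x _.
case: ifP => // nd.
case: (posnP (m x)) => [->|]; first by rewrite expr0.
by move=> /(monosE_supp min) /hall; rewrite nd.
Qed.
End Ev.

Section Bru.
Variable d : nat.
Implicit Types (b : {set 'I_d}) (x y z i : 'I_d).

Lemma rk_swap_le b y i z : y \in b -> (y < i)%N ->
  (rk (i |: (b :\ y)) z <= rk b z)%N.
Proof.
move=> yb yi; rewrite /rk.
case: (ltnP i z) => iz.
  rewrite (cardsD1 i [set l in i |: (b :\ y) | (l < z)%N]).
  rewrite (cardsD1 y [set l in b | (l < z)%N]) !inE eqxx yb iz (ltn_trans yi iz) /=.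
  rewrite !add1n ltnS; apply: subset_leq_card; apply/subsetP=> l; rewrite !inE.
  by case/andP=> li /andP[/orP[/eqP e|/andP[-> ->]] ->] //; rewrite e eqxx in li.
apply: subset_leq_card; apply/subsetP=> l; rewrite !inE.
case/andP=> /orP[/eqP ->|/andP[_ ->]] // lz.
by move: (leq_trans lz iz); rewrite ltnn.
Qed.

Lemma rk_swap_lt b y i : y \in b -> (y < i)%N ->
  (rk (i |: (b :\ y)) i < rk b i)%N.
Proof.
move=> yb yi; apply: proper_card; apply/properP; split.
  apply/subsetP=> l; rewrite !inE.
  by case/andP=> /orP[/eqP ->|/andP[_ ->]] //; rewrite ltnn.
exists y; first by rewrite !inE yb yi.
rewrite !inE eqxx yi andbT /= orbF.
by apply/eqP=> e; rewrite e ltnn in yi.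
Qed.

Lemma bruhat_swap b y i : y \in b -> i \notin b -> (y < i)%N ->
  bruhat_le b (i |: (b :\ y)).
Proof.
move=> yb ib yi; split.
  rewrite cardsU1 (cardsD1 y b) yb !inE (negbTE ib) andbF.
  by [].
move=> k k' kb; rewrite !inE => hk' e; rewrite leqNgt; apply/negP=> kk.
case/orP: hk' => [/eqP ek|/andP[_ k'b]].
  subst k'; move: (rk_swap_lt yb yi); rewrite -e => h.
  by move: (leq_trans h (rk_le b (ltnW kk))); rewrite ltnn.
move: (rk_swap_le k' yb yi); rewrite -e => h.
by move: (leq_ltn_trans h (rk_lt k'b kk)); rewrite ltnn.
Qed.
End Bru.

Definition pos d (b : {set 'I_d}) (m : nat) : nat :=
  if [pick x in b | rk b x == m] is Some x then (x : nat) else 0%N.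

Lemma posE d (b : {set 'I_d}) x : x \in b -> pos b (rk b x) = x.
Proof.
move=> xb; rewrite /pos; case: pickP => [y /andP[yb /eqP e]|h].
  by rewrite (rk_inj yb xb e).
by move: (h x); rewrite xb eqxx.
Qed.

Section Exist.
Variables (Q0 : finType) (d : nat) (F : 'I_d -> Q0).
Variable b : {set 'I_d}.
Variable w : pair d -> C.
Hypothesis h1 : W1 F w.
Hypothesis h2 : forall x, x.2 \notin b -> w x = 0.
Hypothesis h3 : forall x, x.1 \in b -> x.2 \in b -> w x = (x.1 == x.2)%:R.

Lemma Wr_mul n : #|b| = n -> ((Sel n b)^T *m Wm w) *m Sel n b = 1%:M.
Proof.
move=> hn; apply/matrixP => m c.
have [y yb ry] : exists2 y, y \in b & rk b y = c by apply: rk_surj; rewrite hn.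
have [z zb rz] : exists2 z, z \in b & rk b z = m by apply: rk_surj; rewrite hn.
rewrite (colSel _ _ yb ry) (SelT _ _ zb rz) !mxE (@h3 (y, z) yb zb).
suff -> : (y == z) = (m == c) by [].
apply/eqP/eqP => [e|e].
  by apply: val_inj; rewrite /= -rz -ry e.
by apply: (rk_inj yb zb); rewrite ry rz e.
Qed.

Lemma Wm_Sel n : #|b| = n -> Wm w = Sel n b *m ((Sel n b)^T *m Wm w).
Proof.
move=> hn; apply/matrixP => j i.
case jb: (j \in b).
  have rj : (rk b j < n)%N by rewrite -hn rk_bound.
  by rewrite (SelL _ _ jb (c := Ordinal rj)) // (SelT _ _ jb (c := Ordinal rj)).
rewrite SelL0 ?jb // mxE; apply: h2; by rewrite /= jb.
Qed.

Lemma rank_Wm : \rank (Wm w) = #|b|.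
Proof.
set n := #|b|.
have e1 := Wm_Sel (erefl n).
apply/anti_leq/andP; split.
  by rewrite e1; apply: leq_trans (mxrankM_maxl _ _) _; rewrite rank_leq_col.
rewrite -{1}(mxrank1 C n) -(Wr_mul (erefl n)).
apply: leq_trans (mxrankM_maxl _ _) _.
exact: mxrankM_maxr.
Qed.

Lemma det_Wr0 n b' : #|b| = n -> bruhat_le b b' -> b' != b ->
  \det (((Sel n b)^T *m Wm w) *m Sel n b') = 0.
Proof.
move=> hn hbr hne.
have hn' : #|b'| = n by case: hbr => <-.
rewrite /determinant; apply: big1 => s _.
apply/eqP; rewrite mulf_eq0; apply/orP; right; apply: contraT => hnz.
have hle : forall i : 'I_n, (pos b' (s i) <= pos b i)%N.
  move=> i.
  have [y yb ry] : exists2 y, y \in b & rk b y = i by apply: rk_surj; rewrite hn.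
  have [y' y'b ry'] : exists2 y', y' \in b' & rk b' y' = s i by apply: rk_surj; rewrite hn'.
  move/prodf_neq0: hnz => /(_ i isT).
  rewrite (colSel _ _ y'b ry') (SelT _ _ yb ry) mxE => nz.
  have r : rel2 F (y', y) by apply: contraTT nz => /h1 ->; rewrite eqxx.
  rewrite -ry -ry' !posE //.
  by move: r; rewrite rel2E => /andP[].
have hge : forall i : 'I_n, (pos b i <= pos b' i)%N.
  move=> i.
  have [y yb ry] : exists2 y, y \in b & rk b y = i by apply: rk_surj; rewrite hn.
  have [y' y'b ry'] : exists2 y', y' \in b' & rk b' y' = i by apply: rk_surj; rewrite hn'.
  rewrite -{1}ry -ry' !posE //.
  by apply: hbr.2 => //; rewrite ry ry'.
have hsum : (\sum_(i < n) pos b' (s i) = \sum_(i < n) pos b' i)%N.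
  by rewrite [RHS](reindex_inj (@perm_inj _ s)).
have heq : forall i : 'I_n, pos b i = pos b' i.
  move=> i; apply/eqP; rewrite eqn_leq hge andTb; apply: contraT; rewrite -ltnNge => lt.
  have : (\sum_(j < n) pos b j < \sum_(j < n) pos b' j)%N.
    rewrite (bigD1 i) //= [X in (_ < X)%N](bigD1 i) //=.
    by rewrite -addSn; apply: leq_add => //; apply: leq_sum => j _; apply: hge.
  have hs : (\sum_(j < n) pos b' (s j) <= \sum_(j < n) pos b j)%N.
    by apply: leq_sum => j _; apply: hle.
  rewrite hsum in hs.
  by move=> h; move: (leq_trans h hs); rewrite ltnn.
have sub : b \subset b'.
  apply/subsetP => x xb.
  have rx : (rk b x < n)%N by rewrite -hn rk_bound.
  have [y' y'b ry'] : exists2 y', y' \in b' & rk b' y' = Ordinal rx by apply: rk_surj; rewrite hn'.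
  have ry2 : rk b' y' = rk b x by rewrite ry'.
  have := heq (Ordinal rx); rewrite /= posE // -ry2 posE // => e.
  by rewrite (val_inj e).
have : b == b' by rewrite eqEcard sub hn hn' leqnn.
by rewrite eq_sym (negbTE hne).
Qed.

Lemma cell_Wm (V : 'M[C]_d) : (V == Wm w)%MS -> in_schubert_cell b V.
Proof.
move=> hV.
have hrk : \rank V = #|b| by rewrite (eqmx_rank hV) rank_Wm.
have hA : (row_base V <= (Sel (\rank V) b)^T *m Wm w)%MS.
  rewrite (eq_row_base V).
  apply: submx_trans (proj1 (andP hV)) _.
  by rewrite {1}(Wm_Sel (esym hrk)); apply: submxMl.
case/submxP: hA => G eG.
have hG : \det G != 0.
  rewrite -unitfE -unitmxE -row_free_unit /row_free; apply/eqP/anti_leq/andP; split.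
    exact: rank_leq_row.
  have := mxrankM_maxl G ((Sel (\rank V) b)^T *m Wm w).
  by rewrite -eG (eq_row_base V).
have hpl : forall b', plucker (row_base V) b' =
    \det G * \det ((Sel (\rank V) b)^T *m Wm w *m Sel (\rank V) b').
  by move=> b'; rewrite pluckerE eG -(mulmxA G); apply: det_mulmx.
split; first by [].
split.
  by rewrite hpl (Wr_mul (esym hrk)) det1 mulr1.
move=> b' hbr hne; rewrite hpl det_Wr0 ?mulr0 //.
Qed.
End Exist.

Section Uniq.
Variables (Q0 : finType) (d : nat) (F : 'I_d -> Q0).

Lemma cell_echelon (V : 'M[C]_d) b :
  (forall p, (V *m Mspace F p <= V)%MS) -> in_schubert_cell b V ->
  exists w : pair d -> C, [/\ W1 F w, (forall x, x.2 \notin b -> w x = 0),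
    (forall x, x.1 \in b -> x.2 \in b -> w x = (x.1 == x.2)%:R) &
    (V == Wm w)%MS].
Proof.
move=> hgr [hrk [hP hP']].
have hr : #|b| = \rank V by rewrite hrk.
set A := row_base V.
set P := A *m Sel (\rank V) b.
have Pu : P \in unitmx by rewrite unitmxE unitfE -pluckerE.
set B := invmx P *m A.
have hBS : B *m Sel (\rank V) b = 1%:M by rewrite /B -mulmxA mulVmx.
have hAB : A = P *m B by rewrite /B mulmxA mulmxV // mul1mx.
have hBV : (B <= V)%MS.
  by rewrite /B; apply: submx_trans (submxMl _ _) _; rewrite /A eq_row_base.
have hVB : (V <= B)%MS.
  apply: submx_trans (_ : V <= A)%MS _; first by rewrite /A eq_row_base.
  by rewrite hAB; apply: submxMl.
have Bcol : forall y (c : 'I_(\rank V)) k, y \in b -> rk b y = c -> B k y = (k == c)%:R.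
  by move=> y c k yb ry; rewrite -(colSel B k yb ry) hBS mxE.
have Bgr : forall y (c : 'I_(\rank V)) i, y \in b -> rk b y = c -> F i != F y -> B c i = 0.
  move=> y c i yb ry hF.
  have : (B *m Mspace F (F i) <= B)%MS.
    apply: submx_trans hVB; case/submxP: hBV => X ->; rewrite -mulmxA.
    exact: submx_trans (submxMl X _) (hgr (F i)).
  case/submxP => Y eY.
  have Y0 : forall m, Y c m = 0.
    move=> m.
    have [z zb rz] : exists2 z, z \in b & rk b z = m by apply: rk_surj; rewrite hr.
    have : (B *m Mspace F (F i) *m Sel (\rank V) b) c m = (Y *m B *m Sel (\rank V) b) c m.
      by rewrite eY.
    rewrite -(mulmxA Y) hBS mulmx1 => <-.
    rewrite (colSel _ _ zb rz) mulMspace; case: eqP => // hz.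
    rewrite (Bcol z m c zb rz); case: eqP => // e.
    have ezy : z = y by apply: (rk_inj zb yb); rewrite rz ry e.
    by move: hF; rewrite -hz ezy eqxx.
  have e : (B *m Mspace F (F i)) c i = B c i by rewrite mulMspace eqxx.
  rewrite eY mxE big1 in e; first by rewrite -e.
  by move=> m _; rewrite Y0 mul0r.
have Bech : forall y (c : 'I_(\rank V)) i, y \in b -> rk b y = c -> i \notin b ->
    (y < i)%N -> B c i = 0.
  move=> y c i yb ry ib yi; apply/eqP; apply: contraT => nz.
  set b' := i |: (b :\ y).
  have hbr : bruhat_le b b' := bruhat_swap yb ib yi.
  have hne : b' != b.
    apply/eqP => e; have : i \in b' by rewrite !inE eqxx.
    by rewrite e (negbTE ib).
  have h0 := hP' b' hbr hne.
  rewrite pluckerE -/A hAB -(mulmxA P) in h0.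
  have hdm : \det (P *m (B *m Sel (\rank V) b')) = \det P * \det (B *m Sel (\rank V) b').
    by apply: det_mulmx.
  have hd : \det (B *m Sel (\rank V) b') == 0.
    move: h0; rewrite hdm => /eqP; rewrite mulf_eq0 => /orP[|//].
    by move: Pu; rewrite unitmxE unitfE => /negbTE ->.
  case/det0P: hd => x xnz hx.
  have hn' : #|b'| = \rank V by rewrite -hr; case: hbr.
  have hxe : forall j, (x *m (B *m Sel (\rank V) b')) 0 j = 0 by move=> j; rewrite hx mxE.
  have xo : forall m, m != c -> x 0 m = 0.
    move=> m mc.
    have [z zb rz] : exists2 z, z \in b & rk b z = m by apply: rk_surj; rewrite hr.
    have zb' : z \in b'.
      rewrite !inE zb andbT orbC; apply/orP; left; apply/eqP => ezy.
      by move: mc; rewrite -(inj_eq val_inj) /= -rz -ry ezy eqxx.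
    have rz' : (rk b' z < \rank V)%N by rewrite -hn' rk_bound.
    have e : rk b' z = Ordinal rz' by [].
    have := hxe (Ordinal rz').
    rewrite mulmxA (colSel _ _ zb' e) !mxE => <-.
    rewrite (bigD1 m) // (Bcol z m m zb rz) eqxx mulr1 big1 ?Monoid.mulm1 //.
    by move=> k km; rewrite (Bcol z m k zb rz) (negbTE km) mulr0.
  have ib' : i \in b' by rewrite !inE eqxx.
  have ri : (rk b' i < \rank V)%N by rewrite -hn' rk_bound.
  have ei : rk b' i = Ordinal ri by [].
  have := hxe (Ordinal ri).
  rewrite mulmxA (colSel _ _ ib' ei) !mxE (bigD1 c) // big1 ?Monoid.mulm1.
    move/eqP; rewrite mulf_eq0 (negbTE nz) orbF => /eqP xc.
    case/negP: xnz; apply/eqP/rowP => m; rewrite mxE.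
    by case: (eqVneq m c) => [->|]; [rewrite xc | apply: xo].
  by move=> k kc; rewrite xo ?mul0r.
set Bd := Sel (\rank V) b *m B.
have Bd0 : forall i j, ~~ rel2 F (i, j) -> Bd j i = 0.
  move=> i j nr; case jb: (j \in b); last by rewrite /Bd SelL0 ?jb.
  have rj : (rk b j < \rank V)%N by rewrite -hr rk_bound.
  rewrite /Bd (SelL _ _ jb (c := Ordinal rj)) //.
  move: nr; rewrite rel2E negb_and => /orP[hF|].
    exact: (Bgr j (Ordinal rj) i jb erefl hF).
  rewrite -ltnNge => ji.
  case ib: (i \in b); last exact: (Bech j (Ordinal rj) i jb erefl (negbT ib) ji).
  have ri : (rk b i < \rank V)%N by rewrite -hr rk_bound.
  rewrite (Bcol i (Ordinal ri) (Ordinal rj) ib erefl).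
  case: eqP => // /(congr1 val) /= e.
  by move: ji; rewrite (rk_inj jb ib e) ltnn.
exists (fun x => if rel2 F x then Bd x.2 x.1 else 0); split.
- by move=> x nx; rewrite (negbTE nx).
- by move=> x xb; case: ifP => // _; rewrite /Bd SelL0.
- move=> x x1 x2; case: ifP => hx.
    have rj : (rk b x.2 < \rank V)%N by rewrite -hr rk_bound.
    have ri : (rk b x.1 < \rank V)%N by rewrite -hr rk_bound.
    rewrite /Bd (SelL _ _ x2 (c := Ordinal rj)) // (Bcol _ (Ordinal ri)) //.
    suff -> : (Ordinal rj == Ordinal ri) = (x.1 == x.2) by [].
    apply/eqP/eqP => e.
      by apply: (rk_inj x1 x2); move/(congr1 val): e => /= ->.
    by apply: val_inj => /=; exact: (congr1 (rk b) (esym e)).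
  case: eqP => // e; move: hx.
  by case: x e x1 x2 => i j /= -> _ _; rewrite rel2E eqxx leqnn.
- have -> : Wm (fun x => if rel2 F x then Bd x.2 x.1 else 0) = Bd.
    apply/matrixP => j i; rewrite mxE; case: ifP => // nr.
    by rewrite Bd0 // nr.
  apply/andP; split.
    apply: submx_trans hVB _.
    have -> : B = (Sel (\rank V) b)^T *m Bd by rewrite /Bd mulmxA SelTSel // mul1mx.
    exact: submxMl.
  by apply: submx_trans hBV; apply: submxMl.
Qed.
End Uniq.

Section Fin.
Variables (Q0 Q1 : finType) (src tgt : Q1 -> Q0) (d : nat) (F : 'I_d -> Q0).
Variable mu : Q1 -> 'I_d -> 'I_d -> C.
Hypothesis Hmu : is_coef_data src tgt F mu.

Lemma Eq_nonrel3 (w : pair d -> C) v t s : W1 F w ->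
  ~ rel3 src tgt F mu (v, t, s) -> Eq mu w v t s.
Proof.
move=> h1 hn; rewrite /Eq big1; last first.
  move=> s' _; apply: big1 => t' _; apply/eqP; apply: contraT => nz; exfalso; apply: hn.
  move: nz; rewrite !mulf_eq0 !negb_or => /andP[/andP[n1 n2] n3].
  have r1 : rel2 F (t, t') by apply: contraTT n2 => /h1 ->; rewrite eqxx.
  have r2 : rel2 F (s', s) by apply: contraTT n3 => /h1 ->; rewrite eqxx.
  case: (Hmu n1) => e1 e2.
  move: r1 r2; rewrite !rel2E => /andP[/eqP f1 l1] /andP[/eqP f2 l2].
  split; first by rewrite -f2.
  split; first by rewrite f1.
  by exists s', t'.
rewrite big1 // => s' _; apply/eqP; apply: contraT => nz; exfalso; apply: hn.
move: nz; rewrite !mulf_eq0 !negb_or => /andP[n1 n3].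
have r2 : rel2 F (s', s) by apply: contraTT n3 => /h1 ->; rewrite eqxx.
case: (Hmu n1) => e1 e2.
move: r2; rewrite !rel2E => /andP[/eqP f2 l2].
split; first by rewrite -f2.
split; first by [].
by exists s', t.
Qed.
End Fin.

Theorem corollary2p21
  (Q0 Q1 : finType) (src tgt : Q1 -> Q0) (d : nat) (F : 'I_d -> Q0)
  (mu : Q1 -> 'I_d -> 'I_d -> C)
  (Hmu : is_coef_data src tgt F mu)
  (beta : {set 'I_d})
  (Hnc : ~ contradictory src tgt F mu beta)
  (ev : peval d) (Hev : is_ev_beta src tgt F mu beta ev)
  (Htriv : trivial_state src tgt F mu ev) :
  solvable (Sigma_beta src tgt F mu ev) /\ CbetaM_is_point src tgt F mu beta.
Proof.
case: Htriv => [Tp [Tt [Te Tl]]].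
split.
  exists (fun _ _ => true); split.
    by move=> tau ht; exfalso; exact: (Tt tau ht).
  split.
    by move=> pi hp; exfalso; exact: (Tp pi hp).
  move=> [x hx]; elim: hx => [a b hab|a b c _ IH _ _] //.
  by case: a hab => [pi|tau]; case: b => [pi'|tau'] //= [he _];
    [exact: (Te tau' pi) | exact: (Te tau pi')].
case: Hev => [[hd _] [hext hmin]].
have hall : forall x, rel2 F x -> in_dom ev x.
  move=> x r; case: (boolP (in_dom ev x)) => // nd; exfalso; exact: (Tp x (conj r nd)).
set w := wof ev.
have h1 : W1 F w by move=> x; apply: wof0.
have fb : forall x, rel2 F x -> f_beta beta x != None -> w x = odflt 0 (f_beta beta x).
  by move=> x r nn; rewrite /w /wof (hext x r nn).
have h2 : forall x, x.2 \notin beta -> w x = 0.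
  move=> x x2; case: (boolP (rel2 F x)) => r; last exact: h1.
  rewrite /w /wof; move: (hext x r); rewrite /f_beta (negbTE x2).
  case: ifP => x1.
    case: (x.1 =P x.2) => [e|_]; first by rewrite -e x1 in x2.
    by move=> -> //.
  by move=> -> //.
have h3 : forall x, x.1 \in beta -> x.2 \in beta -> w x = (x.1 == x.2)%:R.
  move=> [i j]; rewrite [(i, j).1]/= [(i, j).2]/= => x1 x2.
  case: (boolP (rel2 F (i, j))) => r.
    have fv : f_beta beta (i, j) = Some (i == j)%:R.
      by rewrite /f_beta [(i, j).1]/= [(i, j).2]/= x1; case: (i =P j).
    by rewrite /w /wof (hext _ r) fv //; reflexivity.
  rewrite h1 //; case: (i =P j) => // e; move: r.
  by rewrite e rel2E eqxx leqnn.
have hEq : forall v t s, F s = src v -> Eq mu w v t s.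
  move=> v t s _; case: (classic (rel3 src tgt F mu (v, t, s))) => h3r; last first.
    exact: (Eq_nonrel3 Hmu h1 h3r).
  apply: (proj1 (@evalE_Eq _ _ _ F mu ev v t s hd)).
  rewrite -mu_beta_triv //.
  by apply/eqP; apply: contraT => nz; exfalso; exact: (Tl _ _ (conj h3r nz)).
exists (Wp F w); split.
  split; first exact: Wp_subrep.
  by apply: cell_Wm h1 h2 h3 _ _; apply: Wm_eq_sum.
move=> N [hsub hcell] p.
have hgr : forall p0, ((\sum_q N q)%MS *m Mspace F p0 <= (\sum_q N q))%MS.
  move=> p0.
  have : ((\sum_q N q)%MS <= \sum_q N q)%MS by exact: submx_refl.
  case/sub_sumsmxP => u eu.
  rewrite {1}eu mulmx_suml (bigD1 p0) // big1 ?Monoid.mulm1.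
    rewrite -mulmxA (subM (hsub.1 p0)).
    apply: submx_trans (submxMl _ _) _; exact: (sumsmx_sup p0).
  by move=> q qp; rewrite -mulmxA (subMo (hsub.1 q)) ?mulmx0 // eq_sym.
have [w' [h1' h2' h3' hV']] := cell_echelon hgr hcell.
have hEq' : forall v t s, F s = src v -> Eq mu w' v t s.
  by move=> v t s hs; apply: (subrep_Eq Hmu h1' h2' h3' hsub hV').
pose ev' : peval d := fun x => if rel2 F x then Some (w' x) else None.
have hd' : forall x, in_dom ev' x -> rel2 F x.
  by move=> x; rewrite /in_dom /ev'; case: ifP.
have wev : wof ev' = w'.
  apply: functional_extensionality => x; rewrite /wof /ev'; case: ifP => // nr.
  by rewrite h1' // nr.
have hpe : is_partial_eval src tgt F mu ev'.
  split; first exact: hd'.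
  move=> [[v t] s] pi h3r [rpi _] _; split; first by rewrite /in_dom /ev' rpi.
  apply: (proj2 (@evalE_Eq _ _ _ F mu ev' v t s hd')); rewrite wev; apply: hEq'.
  by case: h3r.
have hext' : extends_f_beta F beta ev'.
  move=> [i j] r nn; rewrite /ev' r.
  move: nn; rewrite /f_beta [(i, j).1]/= [(i, j).2]/= => nn.
  case ib: (i \in beta).
    case jb: (j \in beta).
      rewrite (h3' (i, j) ib jb) [(i, j).1]/= [(i, j).2]/=.
      by case: (i =P j).
    rewrite (h2' (i, j)); last by rewrite [(i, j).2]/= jb.
    by case: (i =P j) => // e; rewrite e jb in ib.
  case jb: (j \in beta); first by rewrite ib jb in nn.
  by rewrite (h2' (i, j)) // [(i, j).2]/= jb.
have hpe2 := hmin ev' hpe hext'.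
have ww : forall x, w' x = w x.
  move=> x; case: (boolP (rel2 F x)) => r; last by rewrite h1' ?h1.
  have := hpe2 x (hall x r); rewrite /ev' r => e.
  by rewrite /w /wof -e; reflexivity.
have hWm : Wm w' = Wm w by apply/matrixP => j i; rewrite !mxE ww.
rewrite hWm in hV'.
exact: (subrep_eq h1 hsub.1 hV' p).
Qed.
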